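(* Let $\Delta^3_6$ be the pure $3$-dimensional simplicial complex on the $12$ vertices $\{\pm1,\pm2,\dots,\pm6\}$ whose $48$ facets are the following $24$ four-element sets together with their antipodal images (the image of a set $F$ under $x\mapsto -x$): $\{1,2,5,6\}$, $\{-1,-2,5,6\}$, $\{2,3,5,6\}$, $\{-2,-3,5,6\}$, $\{3,4,5,6\}$, $\{-3,-4,5,6\}$, $\{1,-4,5,6\}$, $\{1,-4,-5,6\}$, $\{1,-4,-5,-6\}$, $\{1,2,3,5\}$, $\{-1,-2,3,5\}$, $\{1,-2,3,5\}$, $\{1,2,4,6\}$, $\{-1,-2,4,6\}$, $\{2,3,4,6\}$, $\{-2,-3,4,6\}$, $\{1,-3,4,6\}$, $\{2,3,4,-5\}$, $\{-1,2,4,-5\}$, $\{3,4,5,-6\}$, $\{-1,3,5,-6\}$, $\{1,2,-3,4\}$, $\{1,2,3,-4\}$, $\{1,-2,3,-4\}$. Then $\Delta^3_6$ (which is a simplicial $3$-sphere) is not polytopal: there is no simplicial convex $4$-polytope whose boundary complex is combinatorially isomorphic to $\Delta^3_6$.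
   Context: This $\Delta^3_6$ is a member of Jockusch's family of centrally symmetric simplicial $3$-spheres. A simplicial $(d-1)$-sphere is called polytopal if it is isomorphic to the boundary complex of a simplicial convex $d$-polytope; here $d=4$. *)

(* Defs.v *)
From HB Require Import structures.
From mathcomp Require Import all_boot all_order all_algebra.
From mathcomp Require Import reals.
Set Implicit Arguments. Unset Strict Implicit. Unset Printing Implicit Defensive.
Import Order.TTheory GRing.Theory Num.Theory.
Local Open Scope ring_scope.

(* Vertex +/-i (1 <= i <= 6) is encoded as (i-1, sign) : 'I_6 * bool,
   with sign = true meaning negative. *)
Definition V : finType := ('I_6 * bool)%type.

Definition vtx (z : int) : V := (inord (`|z|%N).-1, z < 0).

Definition base_facets : seq (seq int) :=
  [:: [:: 1; 2; 5; 6]; [:: -1; -2; 5; 6]; [:: 2; 3; 5; 6]; [:: -2; -3; 5; 6];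
      [:: 3; 4; 5; 6]; [:: -3; -4; 5; 6]; [:: 1; -4; 5; 6]; [:: 1; -4; -5; 6];
      [:: 1; -4; -5; -6]; [:: 1; 2; 3; 5]; [:: -1; -2; 3; 5]; [:: 1; -2; 3; 5];
      [:: 1; 2; 4; 6]; [:: -1; -2; 4; 6]; [:: 2; 3; 4; 6]; [:: -2; -3; 4; 6];
      [:: 1; -3; 4; 6]; [:: 2; 3; 4; -5]; [:: -1; 2; 4; -5]; [:: 3; 4; 5; -6];
      [:: -1; 3; 5; -6]; [:: 1; 2; -3; 4]; [:: 1; 2; 3; -4]; [:: 1; -2; 3; -4]].

Definition facets_Delta : seq {set V} :=
  [seq [set:: map vtx F] | F <- base_facets ++ map (map (fun z => - z)) base_facets].

Definition in_Delta (S : {set V}) : bool := has (fun F : {set V} => S \subset F) facets_Delta.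

Definition dot4 (R : ringType) (a x : 'rV[R]_4) : R := \sum_(i < 4) a 0 i * x 0 i.

(* S is the vertex set of a face of conv(p(V)): some supporting affine
   functional is <= b on all points, with equality exactly on S.
   (All faces of a polytope are exposed.) *)
Definition is_face (R : realType) (p : V -> 'rV[R]_4) (S : {set V}) : Prop :=
  exists (a : 'rV[R]_4) (b : R),
    forall v, dot4 a (p v) <= b /\ (dot4 a (p v) == b) = (v \in S).

Definition full_dim (R : realType) (p : V -> 'rV[R]_4) : Prop :=
  forall (a : 'rV[R]_4) (b : R), (forall v, dot4 a (p v) = b) -> a = 0.

(* p realizes Delta as the boundary complex of the convex 4-polytope
   conv(p(V)): p is injective, each p v is a vertex, the polytope is
   full-dimensional, and the proper faces of the polytope correspond
   (via their vertex sets) exactly to the faces of Delta.  Since the facets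
   of Delta have 4 vertices, such a polytope is automatically simplicial. *)
Definition polytopal_realization (R : realType) (p : V -> 'rV[R]_4) : Prop :=
  [/\ injective p, full_dim p, (forall v, is_face p [set v])
    & forall S : {set V}, S != setT -> (is_face p S <-> in_Delta S)].

Definition polytopal_Delta (R : realType) : Prop :=
  exists p : V -> 'rV[R]_4, polytopal_realization p.

Example facets_count : size facets_Delta = 48. Proof. by []. Qed.

(* Main.v *)
Require Import Defs.
From HB Require Import structures.
From mathcomp Require Import all_boot all_order all_algebra.
From mathcomp Require Import reals.
From mathcomp Require Import ring lra.
Set Implicit Arguments. Unset Strict Implicit. Unset Printing Implicit Defensive.
Import Order.TTheory GRing.Theory Num.Theory.
Local Open Scope ring_scope.

Section Det.
Variable R : comNzRingType.
Definition detf n (x : nat -> nat -> R) := \det (\matrix_(i < n, j < n) x i j).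
Fixpoint dd n (x : nat -> nat -> R) : R :=
  match n with 0 => 1 | S m =>
   foldr (fun j acc => (if odd j then -1 else 1) * x 0%N j *
       dd m (fun i k => x i.+1 (if Nat.ltb k j then k else k.+1)) + acc) 0 (iota 0 n) end.

Lemma ltbE (k j : nat) : Nat.ltb k j = (k < j)%N.
Proof. by apply/idP/idP => [/PeanoNat.Nat.ltb_lt/ssrnat.ltP|/ssrnat.ltP/PeanoNat.Nat.ltb_lt]. Qed.

Lemma foldr_sum (F : nat -> R) s : foldr (fun j acc => F j + acc) 0 s = \sum_(j <- s) F j.
Proof. elim: s => [|a s IH] /=; first by rewrite big_nil. by rewrite big_cons IH. Qed.

Lemma ddS n x : dd n.+1 x = \sum_(j <- iota 0 n.+1) ((if odd j then -1 else 1) * x 0%N j *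
       dd n (fun i k => x i.+1 (if Nat.ltb k j then k else k.+1))).
Proof. by rewrite -foldr_sum. Qed.

Lemma detf_dd n x : detf n x = dd n x.
Proof.
elim: n x => [|n IH] x; first by rewrite /detf det_mx00.
rewrite ddS /detf (expand_det_row _ ord0).
have -> : iota 0 n.+1 = index_iota 0 n.+1 by rewrite /index_iota subn0.
rewrite big_mkord; apply: eq_bigr => j _.
rewrite /cofactor mxE add0n -signr_odd [_ * x _ _]mulrC -mulrA -IH.
congr (_ * (_ * _)); first by case: (odd j); rewrite ?expr0 ?expr1.
congr (\det _); apply/matrixP => i k; rewrite !mxE /= /bump ltbE add1n.
by case: ltnP => // _; rewrite ?add0n ?add1n.
Qed.

Definition rows5 (r0 r1 r2 r3 r4 : nat -> R) (i : nat) : nat -> R :=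
  match i with 0 => r0 | 1 => r1 | 2 => r2 | 3 => r3 | _ => r4 end.
Definition d5 r0 r1 r2 r3 r4 := dd 5 (rows5 r0 r1 r2 r3 r4).

Lemma GP x1 x2 x3 a b c d :
  d5 x1 x2 x3 a b * d5 x1 x2 x3 c d - d5 x1 x2 x3 a c * d5 x1 x2 x3 b d
  + d5 x1 x2 x3 a d * d5 x1 x2 x3 b c = 0.
Proof. rewrite /d5 /=. ring. Qed.

Lemma d5_sw0 a b c d e : d5 a b c d e = - d5 b a c d e.
Proof. rewrite /d5 /=; ring. Qed.
Lemma d5_sw1 a b c d e : d5 a b c d e = - d5 a c b d e.
Proof. rewrite /d5 /=; ring. Qed.
Lemma d5_sw2 a b c d e : d5 a b c d e = - d5 a b d c e.
Proof. rewrite /d5 /=; ring. Qed.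
Lemma d5_sw3 a b c d e : d5 a b c d e = - d5 a b c e d.
Proof. rewrite /d5 /=; ring. Qed.

Definition dotw (r g : nat -> R) := \sum_(j <- iota 0 5) r j * g j.
Lemma dotwE r g : dotw r g = r 0%N * g 0%N + r 1%N * g 1%N + r 2%N * g 2%N + r 3%N * g 3%N + r 4%N * g 4%N.
Proof. rewrite /dotw /= !big_cons big_nil; ring. Qed.

Definition repl (k : nat) (r : nat -> R) (s : R) (j : nat) := if Nat.eqb j k then s else r j.

Lemma cramer k r0 r1 r2 r3 r4 w : (k < 5)%N ->
  d5 r0 r1 r2 r3 r4 * w k = d5 (repl k r0 (dotw r0 w)) (repl k r1 (dotw r1 w))
     (repl k r2 (dotw r2 w)) (repl k r3 (dotw r3 w)) (repl k r4 (dotw r4 w)).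
Proof.
rewrite !dotwE.
by case: k => [|[|[|[|[|k]]]]] // _; rewrite /d5 /repl /=; ring.
Qed.

Lemma d5_zero_col k r0 r1 r2 r3 r4 : (k < 5)%N ->
  d5 (repl k r0 0) (repl k r1 0) (repl k r2 0) (repl k r3 0) (repl k r4 0) = 0.
Proof. by case: k => [|[|[|[|[|k]]]]] // _; rewrite /d5 /repl /=; ring. Qed.

Lemma d5_trig (x : nat -> nat -> R) :
  x 0%N 1%N = 0 -> x 0%N 2%N = 0 -> x 0%N 3%N = 0 -> x 0%N 4%N = 0 ->
  x 1%N 2%N = 0 -> x 1%N 3%N = 0 -> x 1%N 4%N = 0 ->
  x 2%N 3%N = 0 -> x 2%N 4%N = 0 -> x 3%N 4%N = 0 ->
  dd 5 x = x 0%N 0%N * x 1%N 1%N * x 2%N 2%N * x 3%N 3%N * x 4%N 4%N.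
Proof.
move=> h01 h02 h03 h04 h12 h13 h14 h23 h24 h34 /=.
rewrite ?h01 ?h02 ?h03 ?h04 ?h12 ?h13 ?h14 ?h23 ?h24 ?h34; ring.
Qed.

Lemma d5_mul r0 r1 r2 r3 r4 g0 g1 g2 g3 g4 :
  dd 5 (fun i k => dotw (rows5 r0 r1 r2 r3 r4 i) (rows5 g0 g1 g2 g3 g4 k)) =
  d5 r0 r1 r2 r3 r4 * dd 5 (fun j k => rows5 g0 g1 g2 g3 g4 k j).
Proof.
rewrite /d5 -!detf_dd /detf -det_mulmx; congr (\det _); apply/matrixP => i k.
rewrite !mxE /dotw.
under [RHS]eq_bigr do rewrite !mxE.
by rewrite -(big_mkord xpredT (fun j => rows5 r0 r1 r2 r3 r4 i j * rows5 g0 g1 g2 g3 g4 k j)).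
Qed.

Lemma d5_lin r0 r1 r2 r3 s t (a b : R) :
  d5 r0 r1 r2 r3 (fun j => a * s j - b * t j) = a * d5 r0 r1 r2 r3 s - b * d5 r0 r1 r2 r3 t.
Proof. rewrite /d5 /=; ring. Qed.

Lemma dotw_lin s t g (a b : R) :
  dotw (fun j => a * s j - b * t j) g = a * dotw s g - b * dotw t g.
Proof. rewrite !dotwE; ring. Qed.
End Det.

Section Dom.
Variable R : idomainType.
Lemma d5_orth (r0 r1 r2 r3 r4 u g : nat -> R) :
  dotw r0 g = 0 -> dotw r1 g = 0 -> dotw r2 g = 0 -> dotw r3 g = 0 -> dotw r4 g = 0 ->
  dotw u g != 0 -> d5 r0 r1 r2 r3 r4 = 0.
Proof.
move=> h0 h1 h2 h3 h4 hu; apply/eqP; apply: contraNT hu => hd.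
have gk k : (k < 5)%N -> g k = 0.
  move=> hk; have := @cramer _ k r0 r1 r2 r3 r4 g hk.
  rewrite h0 h1 h2 h3 h4 d5_zero_col // => /eqP; rewrite mulf_eq0 (negPf hd) /=.
  by move/eqP.
by rewrite dotwE !gk // !mulr0 !addr0.
Qed.
End Dom.

Definition allF := base_facets ++ map (map (fun z => - z)) base_facets.
Definition chk (x : V) (zs : seq int) := has (fun z => (`|z|%N.-1 == x.1 :> nat) && ((z < 0) == x.2)) zs.
Definition chk4 a b c d k := [&& (k < 48)%N, all (fun z => (`|z|%N.-1 < 6)%N) (nth [::] allF k),
   chk a (nth [::] allF k), chk b (nth [::] allF k), chk c (nth [::] allF k) & chk d (nth [::] allF k)].

Lemma chkP x zs : all (fun z => (`|z|%N.-1 < 6)%N) zs -> chk x zs -> x \in map vtx zs.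
Proof.
move=> /allP hz /hasP[z zin /andP[/eqP e1 /eqP e2]]; apply/mapP; exists z => //.
case: x e1 e2 => o b /= e1 e2; rewrite /vtx e2; congr pair; apply: val_inj.
by rewrite /= inordK ?e1 // (hz z zin).
Qed.

Lemma inD4 a b c d k : chk4 a b c d k -> in_Delta [set a; b; c; d].
Proof.
case/and5P => hk ha hxa hxb /andP[hxc hxd].
apply/hasP; exists (nth set0 facets_Delta k).
  by apply: mem_nth; rewrite size_map size_cat size_map.
rewrite (nth_map [::]); last by rewrite size_cat size_map.
apply/subsetP => x; rewrite !inE => /orP[/orP[/orP[/eqP->|/eqP->]|/eqP->]|/eqP->];
  exact: chkP.
Qed.

Section Real.
Variable R : realType.
Variable p : V -> 'rV[R]_4.

Definition q (v : V) : nat -> R := fun j => if (j < 4)%N then p v 0 (inord j) else 1.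

Lemma dot4E (a x : 'rV[R]_4) : dot4 a x =
  a 0 (inord 0) * x 0 (inord 0) + a 0 (inord 1) * x 0 (inord 1) +
  a 0 (inord 2) * x 0 (inord 2) + a 0 (inord 3) * x 0 (inord 3).
Proof.
rewrite /dot4 (eq_bigr (fun i : 'I_4 => a 0 (inord i) * x 0 (inord i))); last first.
  by move=> i _; rewrite inord_val.
rewrite -(big_mkord xpredT (fun i => a 0 (inord i) * x 0 (inord i))).
rewrite /index_iota /= !big_cons big_nil; ring.
Qed.

Lemma face_fun S : is_face p S ->
  exists g : nat -> R, forall u, dotw (q u) g <= 0 /\ ((dotw (q u) g == 0) = (u \in S)).
Proof.
case=> a [b H]; exists (fun j => if (j < 4)%N then a 0 (inord j) else - b) => u.
have -> : dotw (q u) (fun j => if (j < 4)%N then a 0 (inord j) else - b) = dot4 a (p u) - b.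
  rewrite dotwE dot4E /q /=; ring.
case: (H u) => h1 h2; rewrite subr_eq0 h2; split => //; by rewrite subr_le0.
Qed.

Hypothesis Hf : forall S : {set V}, S != setT -> in_Delta S -> is_face p S.

Lemma ffun_of S : S != setT -> in_Delta S ->
  exists g : nat -> R, forall u, dotw (q u) g <= 0 /\ ((dotw (q u) g == 0) = (u \in S)).
Proof. by move=> h1 h2; apply: face_fun; apply: Hf. Qed.

Lemma inD_sub (S S' : {set V}) : in_Delta S -> S' \subset S -> in_Delta S'.
Proof. by case/hasP => F FD sF sS; apply/hasP; exists F => //; apply: subset_trans sS sF. Qed.

Lemma notT (S : {set V}) v : v \notin S -> S != setT.
Proof. by apply: contraNneq => ->; rewrite inE. Qed.

Lemma facet_nz f0 f1 f2 f3 v : in_Delta [set f0; f1; f2; f3] -> v \notin [set f0; f1; f2; f3] ->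
  f0 \notin [set f1;f2;f3] -> f1 \notin [set f0;f2;f3] ->
  f2 \notin [set f0;f1;f3] -> f3 \notin [set f0;f1;f2] ->
  d5 (q f0) (q f1) (q f2) (q f3) (q v) != 0.
Proof.
move=> hS hv n0 n1 n2 n3.
have hST := notT hv.
have sub3 (a b c : V) : a \in [set f0; f1; f2; f3] -> b \in [set f0; f1; f2; f3] -> c \in [set f0; f1; f2; f3] ->
   [set a; b; c] \subset [set f0; f1; f2; f3].
  by move=> ha hb hc; apply/subsetP => x; move: ha hb hc; rewrite !inE => ha hb hc /orP[/orP[/eqP->|/eqP->]|/eqP->].
have m0 : f0 \in [set f0; f1; f2; f3] by rewrite !inE eqxx ?orbT.
have m1 : f1 \in [set f0; f1; f2; f3] by rewrite !inE eqxx ?orbT.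
have m2 : f2 \in [set f0; f1; f2; f3] by rewrite !inE eqxx ?orbT.
have m3 : f3 \in [set f0; f1; f2; f3] by rewrite !inE eqxx ?orbT.
have h0 := inD_sub hS (sub3 _ _ _ m1 m2 m3).
have h1 := inD_sub hS (sub3 _ _ _ m0 m2 m3).
have h2 := inD_sub hS (sub3 _ _ _ m0 m1 m3).
have h3 := inD_sub hS (sub3 _ _ _ m0 m1 m2).
have nsub (a b c : V) : v \notin [set a; b; c] -> [set a; b; c] != setT by move/notT.
have h0T : [set f1;f2;f3] != setT by apply: (notT (v := f0)).
have h1T : [set f0;f2;f3] != setT by apply: (notT (v := f1)).
have h2T : [set f0;f1;f3] != setT by apply: (notT (v := f2)).
have h3T : [set f0;f1;f2] != setT by apply: (notT (v := f3)).
have [g Hg] := ffun_of hST hS; have [g0 H0] := ffun_of h0T h0.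
have [g1 H1] := ffun_of h1T h1; have [g2 H2] := ffun_of h2T h2; have [g3 H3] := ffun_of h3T h3.
have Z (G : nat -> R) (T : {set V}) u : (forall u, dotw (q u) G <= 0 /\ ((dotw (q u) G == 0) = (u \in T))) ->
   u \in T -> dotw (q u) G = 0.
  by move=> HG uT; apply/eqP; rewrite (proj2 (HG u)).
have N (G : nat -> R) (T : {set V}) u : (forall u, dotw (q u) G <= 0 /\ ((dotw (q u) G == 0) = (u \in T))) ->
   u \notin T -> dotw (q u) G != 0.
  by move=> HG uT; rewrite (proj2 (HG u)).
have := d5_mul (q f0) (q f1) (q f2) (q f3) (q v) g0 g1 g2 g3 g.
rewrite d5_trig /=; first last.
all: try (apply: Z; [eassumption| by rewrite !inE eqxx ?orbT]).
move=> E; apply/negP => /eqP D0; move: E; rewrite D0 mul0r => /eqP.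
apply/negP; rewrite !mulf_eq0 !negb_or.
by rewrite (N _ _ _ H0 n0) (N _ _ _ H1 n1) (N _ _ _ H2 n2) (N _ _ _ H3 n3) (N _ _ _ Hg hv).
Qed.

Lemma facet_pos f0 f1 f2 f3 v w : in_Delta [set f0; f1; f2; f3] ->
  v \notin [set f0; f1; f2; f3] -> w \notin [set f0; f1; f2; f3] ->
  f0 \notin [set f1;f2;f3] -> f1 \notin [set f0;f2;f3] ->
  f2 \notin [set f0;f1;f3] -> f3 \notin [set f0;f1;f2] ->
  0 < d5 (q f0) (q f1) (q f2) (q f3) (q v) * d5 (q f0) (q f1) (q f2) (q f3) (q w).
Proof.
move=> hS nv' nw' n0 n1 n2 n3.
have nv := facet_nz hS nv' n0 n1 n2 n3; have nw := facet_nz hS nw' n0 n1 n2 n3.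
have hST := notT nv'.
have [g Hg] := ffun_of hST hS.
have Z u : u \in [set f0; f1; f2; f3] -> dotw (q u) g = 0.
  by move=> uT; apply/eqP; rewrite (proj2 (Hg u)).
have fvn : dotw (q v) g < 0 by rewrite lt_neqAle (proj2 (Hg v)) nv' (proj1 (Hg v)).
have fwn : dotw (q w) g < 0 by rewrite lt_neqAle (proj2 (Hg w)) nw' (proj1 (Hg w)).
set fv := dotw (q v) g in fvn *; set fw := dotw (q w) g in fwn *.
have h0 : d5 (q f0) (q f1) (q f2) (q f3) (fun j => fv * q w j - fw * q v j) = 0.
  apply: (@d5_orth _ _ _ _ _ _ (q v)).
  1-4: by apply: Z; rewrite !inE eqxx ?orbT.
  - by rewrite dotw_lin -/fv -/fw mulrC subrr.
  - by rewrite -/fv lt_eqF.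
move: h0; rewrite d5_lin.
set Dv := d5 _ _ _ _ (q v); set Dw := d5 _ _ _ _ (q w) => e.
have hp : 0 < Dv ^+ 2 by rewrite exprn_even_gt0.
rewrite expr2 in hp.
have e1 : fv * Dw = fw * Dv by apply/eqP; rewrite -subr_eq0 e.
have e2 : Dv * Dw * fv = fw * (Dv * Dv) by rewrite -mulrA [Dw * fv]mulrC e1; ring.
have e3 : Dv * Dw * fv < 0 by rewrite e2 mulrC pmulr_rlt0.
clear -e3 fvn; nra.
Qed.
End Real.

Definition P1 : V := (@Ordinal 6 0 isT, false).
Definition P2 : V := (@Ordinal 6 1 isT, false).
Definition P3 : V := (@Ordinal 6 2 isT, false).
Definition P4 : V := (@Ordinal 6 3 isT, false).
Definition P5 : V := (@Ordinal 6 4 isT, false).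
Definition P6 : V := (@Ordinal 6 5 isT, false).
Definition N1 : V := (@Ordinal 6 0 isT, true).
Definition N2 : V := (@Ordinal 6 1 isT, true).
Definition N3 : V := (@Ordinal 6 2 isT, true).
Definition N4 : V := (@Ordinal 6 3 isT, true).
Definition N5 : V := (@Ordinal 6 4 isT, true).
Definition N6 : V := (@Ordinal 6 5 isT, true).

Lemma chain (R : realType) (Dx : V -> V -> V -> V -> V -> R)
 (HGP : forall x1 x2 x3 a b c d, Dx x1 x2 x3 a b * Dx x1 x2 x3 c d - Dx x1 x2 x3 a c * Dx x1 x2 x3 b d
     + Dx x1 x2 x3 a d * Dx x1 x2 x3 b c = 0)
 (Hsw0 : forall a b c d e, Dx a b c d e = - Dx b a c d e)
 (Hsw1 : forall a b c d e, Dx a b c d e = - Dx a c b d e)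
 (Hsw2 : forall a b c d e, Dx a b c d e = - Dx a b d c e)
 (Hsw3 : forall a b c d e, Dx a b c d e = - Dx a b c e d)
 (Hfac : forall f0 f1 f2 f3 v w k, chk4 f0 f1 f2 f3 k -> v \notin [set f0; f1; f2; f3] ->
    w \notin [set f0; f1; f2; f3] -> f0 \notin [set f1;f2;f3] -> f1 \notin [set f0;f2;f3] ->
    f2 \notin [set f0;f1;f3] -> f3 \notin [set f0;f1;f2] ->
    0 < Dx f0 f1 f2 f3 v * Dx f0 f1 f2 f3 w)
 (Href : 0 < Dx N6 N5 N4 N3 N2) : False.
Proof.
have h0 : 0 < (Dx N6 N5 N4 N3 N2) := Href.
have h1 : 0 < (Dx N6 N5 N4 N3 N1).
{ have h := Hfac N6 N5 N4 N3 N1 N2 28 ltac:(by vm_compute) ltac:(by rewrite !inE) ltac:(by rewrite !inE) ltac:(by rewrite !inE) ltac:(by rewrite !inE) ltac:(by rewrite !inE) ltac:(by rewrite !inE).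
  clear -h h0; nra. }
have h2 : 0 < (Dx N6 N5 N4 N3 P1).
{ have h := Hfac N6 N5 N4 N3 P1 N2 28 ltac:(by vm_compute) ltac:(by rewrite !inE) ltac:(by rewrite !inE) ltac:(by rewrite !inE) ltac:(by rewrite !inE) ltac:(by rewrite !inE) ltac:(by rewrite !inE).
  clear -h h0; nra. }
have h3 : 0 < (Dx N6 N5 N4 N3 P2).
{ have h := Hfac N6 N5 N4 N3 P2 N2 28 ltac:(by vm_compute) ltac:(by rewrite !inE) ltac:(by rewrite !inE) ltac:(by rewrite !inE) ltac:(by rewrite !inE) ltac:(by rewrite !inE) ltac:(by rewrite !inE).
  clear -h h0; nra. }
have h4 : 0 < (Dx N6 N5 N4 N3 P3).
{ have h := Hfac N6 N5 N4 N3 P3 N2 28 ltac:(by vm_compute) ltac:(by rewrite !inE) ltac:(by rewrite !inE) ltac:(by rewrite !inE) ltac:(by rewrite !inE) ltac:(by rewrite !inE) ltac:(by rewrite !inE).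
  clear -h h0; nra. }
have h5 : 0 < (Dx N6 N5 N4 N3 P4).
{ have h := Hfac N6 N5 N4 N3 P4 N2 28 ltac:(by vm_compute) ltac:(by rewrite !inE) ltac:(by rewrite !inE) ltac:(by rewrite !inE) ltac:(by rewrite !inE) ltac:(by rewrite !inE) ltac:(by rewrite !inE).
  clear -h h0; nra. }
have h6 : 0 < (Dx N6 N5 N4 N3 P5).
{ have h := Hfac N6 N5 N4 N3 P5 N2 28 ltac:(by vm_compute) ltac:(by rewrite !inE) ltac:(by rewrite !inE) ltac:(by rewrite !inE) ltac:(by rewrite !inE) ltac:(by rewrite !inE) ltac:(by rewrite !inE).
  clear -h h0; nra. }
have h7 : 0 < (Dx N6 N5 N4 N3 P6).
{ have h := Hfac N6 N5 N4 N3 P6 N2 28 ltac:(by vm_compute) ltac:(by rewrite !inE) ltac:(by rewrite !inE) ltac:(by rewrite !inE) ltac:(by rewrite !inE) ltac:(by rewrite !inE) ltac:(by rewrite !inE).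
  clear -h h0; nra. }
have h36 : 0 < (Dx N6 N5 N3 N2 N1).
{ have h := Hfac N6 N5 N3 N2 N1 N4 26 ltac:(by vm_compute) ltac:(by rewrite !inE) ltac:(by rewrite !inE) ltac:(by rewrite !inE) ltac:(by rewrite !inE) ltac:(by rewrite !inE) ltac:(by rewrite !inE).
  rewrite (Hsw3 N6 N5 N3 N2 N4) in h.
  rewrite (Hsw2 N6 N5 N3 N4 N2) in h.
  clear -h h0; nra. }
have h8 : 0 < (Dx N6 N5 N4 N2 N1).
{ have h := Hfac N6 N5 N2 N1 N4 N3 24 ltac:(by vm_compute) ltac:(by rewrite !inE) ltac:(by rewrite !inE) ltac:(by rewrite !inE) ltac:(by rewrite !inE) ltac:(by rewrite !inE) ltac:(by rewrite !inE).
  rewrite (Hsw3 N6 N5 N2 N1 N4) in h.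
  rewrite (Hsw2 N6 N5 N2 N4 N1) in h.
  rewrite (Hsw3 N6 N5 N2 N1 N3) in h.
  rewrite (Hsw2 N6 N5 N2 N3 N1) in h.
  clear -h h36; nra. }
have h9 : 0 < (Dx N6 N5 N4 N2 P1).
{ have h := Hfac N6 N5 N4 P1 N2 N3 8 ltac:(by vm_compute) ltac:(by rewrite !inE) ltac:(by rewrite !inE) ltac:(by rewrite !inE) ltac:(by rewrite !inE) ltac:(by rewrite !inE) ltac:(by rewrite !inE).
  rewrite (Hsw3 N6 N5 N4 P1 N2) in h.
  rewrite (Hsw3 N6 N5 N4 P1 N3) in h.
  clear -h h2; nra. }
have h15 : 0 < (Dx N6 N5 N4 N1 P1).
{ have h := Hfac N6 N5 N4 P1 N1 N3 8 ltac:(by vm_compute) ltac:(by rewrite !inE) ltac:(by rewrite !inE) ltac:(by rewrite !inE) ltac:(by rewrite !inE) ltac:(by rewrite !inE) ltac:(by rewrite !inE).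
  rewrite (Hsw3 N6 N5 N4 P1 N1) in h.
  rewrite (Hsw3 N6 N5 N4 P1 N3) in h.
  clear -h h2; nra. }
have h120 : (Dx N6 N4 N3 N2 N1) < 0.
{ have h := Hfac N6 N4 N3 N2 N1 N5 38 ltac:(by vm_compute) ltac:(by rewrite !inE) ltac:(by rewrite !inE) ltac:(by rewrite !inE) ltac:(by rewrite !inE) ltac:(by rewrite !inE) ltac:(by rewrite !inE).
  rewrite (Hsw3 N6 N4 N3 N2 N5) in h.
  rewrite (Hsw2 N6 N4 N3 N5 N2) in h.
  rewrite (Hsw1 N6 N4 N5 N3 N2) in h.
  clear -h h0; nra. }
have h150 : (Dx N6 N4 N2 N1 P3) < 0.
{ have h := Hfac N6 N4 N2 N1 P3 N3 36 ltac:(by vm_compute) ltac:(by rewrite !inE) ltac:(by rewrite !inE) ltac:(by rewrite !inE) ltac:(by rewrite !inE) ltac:(by rewrite !inE) ltac:(by rewrite !inE).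
  rewrite (Hsw3 N6 N4 N2 N1 N3) in h.
  rewrite (Hsw2 N6 N4 N2 N3 N1) in h.
  clear -h h120; nra. }
have h17 : 0 < (Dx N6 N5 N4 N1 P3).
{ have h := Hfac N6 N4 N1 P3 N5 N2 40 ltac:(by vm_compute) ltac:(by rewrite !inE) ltac:(by rewrite !inE) ltac:(by rewrite !inE) ltac:(by rewrite !inE) ltac:(by rewrite !inE) ltac:(by rewrite !inE).
  rewrite (Hsw3 N6 N4 N1 P3 N5) in h.
  rewrite (Hsw2 N6 N4 N1 N5 P3) in h.
  rewrite (Hsw1 N6 N4 N5 N1 P3) in h.
  rewrite (Hsw3 N6 N4 N1 P3 N2) in h.
  rewrite (Hsw2 N6 N4 N1 N2 P3) in h.
  clear -h h150; nra. }
have h22 : (Dx N6 N5 N4 P1 P3) < 0.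
{ have h := Hfac N6 N5 N4 P1 P3 N3 8 ltac:(by vm_compute) ltac:(by rewrite !inE) ltac:(by rewrite !inE) ltac:(by rewrite !inE) ltac:(by rewrite !inE) ltac:(by rewrite !inE) ltac:(by rewrite !inE).
  rewrite (Hsw3 N6 N5 N4 P1 N3) in h.
  clear -h h2; nra. }
have h24 : (Dx N6 N5 N4 P1 P5) < 0.
{ have h := Hfac N6 N5 N4 P1 P5 N3 8 ltac:(by vm_compute) ltac:(by rewrite !inE) ltac:(by rewrite !inE) ltac:(by rewrite !inE) ltac:(by rewrite !inE) ltac:(by rewrite !inE) ltac:(by rewrite !inE).
  rewrite (Hsw3 N6 N5 N4 P1 N3) in h.
  clear -h h2; nra. }
have h25 : (Dx N6 N5 N4 P1 P6) < 0.
{ have h := Hfac N6 N5 N4 P1 P6 N3 8 ltac:(by vm_compute) ltac:(by rewrite !inE) ltac:(by rewrite !inE) ltac:(by rewrite !inE) ltac:(by rewrite !inE) ltac:(by rewrite !inE) ltac:(by rewrite !inE).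
  rewrite (Hsw3 N6 N5 N4 P1 N3) in h.
  clear -h h2; nra. }
have h21 : (Dx N6 N5 N4 P1 P2) < 0.
{ have h := Hfac N6 N5 N4 P1 P2 N3 8 ltac:(by vm_compute) ltac:(by rewrite !inE) ltac:(by rewrite !inE) ltac:(by rewrite !inE) ltac:(by rewrite !inE) ltac:(by rewrite !inE) ltac:(by rewrite !inE).
  rewrite (Hsw3 N6 N5 N4 P1 N3) in h.
  clear -h h2; nra. }
have h100 : (Dx N6 N5 P1 P2 P3) < 0.
{ have h := Hfac N6 N5 P1 P2 P3 N4 25 ltac:(by vm_compute) ltac:(by rewrite !inE) ltac:(by rewrite !inE) ltac:(by rewrite !inE) ltac:(by rewrite !inE) ltac:(by rewrite !inE) ltac:(by rewrite !inE).
  rewrite (Hsw3 N6 N5 P1 P2 N4) in h.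
  rewrite (Hsw2 N6 N5 P1 N4 P2) in h.
  clear -h h21; nra. }
have h26 : (Dx N6 N5 N4 P2 P3) < 0.
{ have h := Hfac N6 N5 P2 P3 N4 P1 27 ltac:(by vm_compute) ltac:(by rewrite !inE) ltac:(by rewrite !inE) ltac:(by rewrite !inE) ltac:(by rewrite !inE) ltac:(by rewrite !inE) ltac:(by rewrite !inE).
  rewrite (Hsw3 N6 N5 P2 P3 N4) in h.
  rewrite (Hsw2 N6 N5 P2 N4 P3) in h.
  rewrite (Hsw3 N6 N5 P2 P3 P1) in h.
  rewrite (Hsw2 N6 N5 P2 P1 P3) in h.
  clear -h h100; nra. }
have h37 : 0 < (Dx N6 N5 N3 N2 P1).
{ have h := Hfac N6 N5 N3 N2 P1 N4 26 ltac:(by vm_compute) ltac:(by rewrite !inE) ltac:(by rewrite !inE) ltac:(by rewrite !inE) ltac:(by rewrite !inE) ltac:(by rewrite !inE) ltac:(by rewrite !inE).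
  rewrite (Hsw3 N6 N5 N3 N2 N4) in h.
  rewrite (Hsw2 N6 N5 N3 N4 N2) in h.
  clear -h h0; nra. }
have h39 : 0 < (Dx N6 N5 N3 N2 P3).
{ have h := Hfac N6 N5 N3 N2 P3 N4 26 ltac:(by vm_compute) ltac:(by rewrite !inE) ltac:(by rewrite !inE) ltac:(by rewrite !inE) ltac:(by rewrite !inE) ltac:(by rewrite !inE) ltac:(by rewrite !inE).
  rewrite (Hsw3 N6 N5 N3 N2 N4) in h.
  rewrite (Hsw2 N6 N5 N3 N4 N2) in h.
  clear -h h0; nra. }
have h41 : 0 < (Dx N6 N5 N3 N2 P5).
{ have h := Hfac N6 N5 N3 N2 P5 N4 26 ltac:(by vm_compute) ltac:(by rewrite !inE) ltac:(by rewrite !inE) ltac:(by rewrite !inE) ltac:(by rewrite !inE) ltac:(by rewrite !inE) ltac:(by rewrite !inE).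
  rewrite (Hsw3 N6 N5 N3 N2 N4) in h.
  rewrite (Hsw2 N6 N5 N3 N4 N2) in h.
  clear -h h0; nra. }
have h42 : 0 < (Dx N6 N5 N3 N2 P6).
{ have h := Hfac N6 N5 N3 N2 P6 N4 26 ltac:(by vm_compute) ltac:(by rewrite !inE) ltac:(by rewrite !inE) ltac:(by rewrite !inE) ltac:(by rewrite !inE) ltac:(by rewrite !inE) ltac:(by rewrite !inE).
  rewrite (Hsw3 N6 N5 N3 N2 N4) in h.
  rewrite (Hsw2 N6 N5 N3 N4 N2) in h.
  clear -h h0; nra. }
have h415 : 0 < (Dx N5 N3 N2 N1 P2).
{ have h := Hfac N5 N3 N2 N1 P2 N6 33 ltac:(by vm_compute) ltac:(by rewrite !inE) ltac:(by rewrite !inE) ltac:(by rewrite !inE) ltac:(by rewrite !inE) ltac:(by rewrite !inE) ltac:(by rewrite !inE).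
  rewrite (Hsw3 N5 N3 N2 N1 N6) in h.
  rewrite (Hsw2 N5 N3 N2 N6 N1) in h.
  rewrite (Hsw1 N5 N3 N6 N2 N1) in h.
  rewrite (Hsw0 N5 N6 N3 N2 N1) in h.
  clear -h h36; nra. }
have h44 : 0 < (Dx N6 N5 N3 N1 P2).
{ have h := Hfac N5 N3 N1 P2 N6 N2 35 ltac:(by vm_compute) ltac:(by rewrite !inE) ltac:(by rewrite !inE) ltac:(by rewrite !inE) ltac:(by rewrite !inE) ltac:(by rewrite !inE) ltac:(by rewrite !inE).
  rewrite (Hsw3 N5 N3 N1 P2 N6) in h.
  rewrite (Hsw2 N5 N3 N1 N6 P2) in h.
  rewrite (Hsw1 N5 N3 N6 N1 P2) in h.
  rewrite (Hsw0 N5 N6 N3 N1 P2) in h.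
  rewrite (Hsw3 N5 N3 N1 P2 N2) in h.
  rewrite (Hsw2 N5 N3 N1 N2 P2) in h.
  clear -h h415; nra. }
have h49 : (Dx N6 N5 N3 P1 P2) < 0.
{ have h := Hfac N6 N5 P1 P2 N3 N4 25 ltac:(by vm_compute) ltac:(by rewrite !inE) ltac:(by rewrite !inE) ltac:(by rewrite !inE) ltac:(by rewrite !inE) ltac:(by rewrite !inE) ltac:(by rewrite !inE).
  rewrite (Hsw3 N6 N5 P1 P2 N3) in h.
  rewrite (Hsw2 N6 N5 P1 N3 P2) in h.
  rewrite (Hsw3 N6 N5 P1 P2 N4) in h.
  rewrite (Hsw2 N6 N5 P1 N4 P2) in h.
  clear -h h21; nra. }
have h347 : (Dx N5 N4 N3 P1 P6) < 0.
{ have h := Hfac N5 N4 N3 P6 P1 N6 43 ltac:(by vm_compute) ltac:(by rewrite !inE) ltac:(by rewrite !inE) ltac:(by rewrite !inE) ltac:(by rewrite !inE) ltac:(by rewrite !inE) ltac:(by rewrite !inE).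
  rewrite (Hsw3 N5 N4 N3 P6 P1) in h.
  rewrite (Hsw3 N5 N4 N3 P6 N6) in h.
  rewrite (Hsw2 N5 N4 N3 N6 P6) in h.
  rewrite (Hsw1 N5 N4 N6 N3 P6) in h.
  rewrite (Hsw0 N5 N6 N4 N3 P6) in h.
  clear -h h7; nra. }
have h53 : 0 < (Dx N6 N5 N3 P1 P6).
{ have h := Hfac N5 N3 P1 P6 N6 N4 44 ltac:(by vm_compute) ltac:(by rewrite !inE) ltac:(by rewrite !inE) ltac:(by rewrite !inE) ltac:(by rewrite !inE) ltac:(by rewrite !inE) ltac:(by rewrite !inE).
  rewrite (Hsw3 N5 N3 P1 P6 N6) in h.
  rewrite (Hsw2 N5 N3 P1 N6 P6) in h.
  rewrite (Hsw1 N5 N3 N6 P1 P6) in h.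
  rewrite (Hsw0 N5 N6 N3 P1 P6) in h.
  rewrite (Hsw3 N5 N3 P1 P6 N4) in h.
  rewrite (Hsw2 N5 N3 P1 N4 P6) in h.
  rewrite (Hsw1 N5 N3 N4 P1 P6) in h.
  clear -h h347; nra. }
have h54 : (Dx N6 N5 N3 P2 P3) < 0.
{ have h := Hfac N6 N5 P2 P3 N3 P1 27 ltac:(by vm_compute) ltac:(by rewrite !inE) ltac:(by rewrite !inE) ltac:(by rewrite !inE) ltac:(by rewrite !inE) ltac:(by rewrite !inE) ltac:(by rewrite !inE).
  rewrite (Hsw3 N6 N5 P2 P3 N3) in h.
  rewrite (Hsw2 N6 N5 P2 N3 P3) in h.
  rewrite (Hsw3 N6 N5 P2 P3 P1) in h.
  rewrite (Hsw2 N6 N5 P2 P1 P3) in h.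
  clear -h h100; nra. }
have h67 : 0 < (Dx N6 N5 N2 N1 P4).
{ have h := Hfac N6 N5 N2 N1 P4 N3 24 ltac:(by vm_compute) ltac:(by rewrite !inE) ltac:(by rewrite !inE) ltac:(by rewrite !inE) ltac:(by rewrite !inE) ltac:(by rewrite !inE) ltac:(by rewrite !inE).
  rewrite (Hsw3 N6 N5 N2 N1 N3) in h.
  rewrite (Hsw2 N6 N5 N2 N3 N1) in h.
  clear -h h36; nra. }
have h94 : (Dx N6 N5 N1 P3 P4) < 0.
{ have h := Hfac N6 N5 N1 P4 P3 N2 30 ltac:(by vm_compute) ltac:(by rewrite !inE) ltac:(by rewrite !inE) ltac:(by rewrite !inE) ltac:(by rewrite !inE) ltac:(by rewrite !inE) ltac:(by rewrite !inE).
  rewrite (Hsw3 N6 N5 N1 P4 P3) in h.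
  rewrite (Hsw3 N6 N5 N1 P4 N2) in h.
  rewrite (Hsw2 N6 N5 N1 N2 P4) in h.
  clear -h h67; nra. }
have h58 : (Dx N6 N5 N3 P3 P4) < 0.
{ have h := Hfac N6 N5 P3 P4 N3 N1 29 ltac:(by vm_compute) ltac:(by rewrite !inE) ltac:(by rewrite !inE) ltac:(by rewrite !inE) ltac:(by rewrite !inE) ltac:(by rewrite !inE) ltac:(by rewrite !inE).
  rewrite (Hsw3 N6 N5 P3 P4 N3) in h.
  rewrite (Hsw2 N6 N5 P3 N3 P4) in h.
  rewrite (Hsw3 N6 N5 P3 P4 N1) in h.
  rewrite (Hsw2 N6 N5 P3 N1 P4) in h.
  clear -h h94; nra. }
have h64 : 0 < (Dx N6 N5 N2 N1 P1).
{ have h := Hfac N6 N5 N2 N1 P1 N3 24 ltac:(by vm_compute) ltac:(by rewrite !inE) ltac:(by rewrite !inE) ltac:(by rewrite !inE) ltac:(by rewrite !inE) ltac:(by rewrite !inE) ltac:(by rewrite !inE).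
  rewrite (Hsw3 N6 N5 N2 N1 N3) in h.
  rewrite (Hsw2 N6 N5 N2 N3 N1) in h.
  clear -h h36; nra. }
have h66 : 0 < (Dx N6 N5 N2 N1 P3).
{ have h := Hfac N6 N5 N2 N1 P3 N3 24 ltac:(by vm_compute) ltac:(by rewrite !inE) ltac:(by rewrite !inE) ltac:(by rewrite !inE) ltac:(by rewrite !inE) ltac:(by rewrite !inE) ltac:(by rewrite !inE).
  rewrite (Hsw3 N6 N5 N2 N1 N3) in h.
  rewrite (Hsw2 N6 N5 N2 N3 N1) in h.
  clear -h h36; nra. }
have h68 : 0 < (Dx N6 N5 N2 N1 P5).
{ have h := Hfac N6 N5 N2 N1 P5 N3 24 ltac:(by vm_compute) ltac:(by rewrite !inE) ltac:(by rewrite !inE) ltac:(by rewrite !inE) ltac:(by rewrite !inE) ltac:(by rewrite !inE) ltac:(by rewrite !inE).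
  rewrite (Hsw3 N6 N5 N2 N1 N3) in h.
  rewrite (Hsw2 N6 N5 N2 N3 N1) in h.
  clear -h h36; nra. }
have h69 : 0 < (Dx N6 N5 N2 N1 P6).
{ have h := Hfac N6 N5 N2 N1 P6 N3 24 ltac:(by vm_compute) ltac:(by rewrite !inE) ltac:(by rewrite !inE) ltac:(by rewrite !inE) ltac:(by rewrite !inE) ltac:(by rewrite !inE) ltac:(by rewrite !inE).
  rewrite (Hsw3 N6 N5 N2 N1 N3) in h.
  rewrite (Hsw2 N6 N5 N2 N3 N1) in h.
  clear -h h36; nra. }
have h70 : (Dx N6 N5 N2 P1 P2) < 0.
{ have h := Hfac N6 N5 P1 P2 N2 N4 25 ltac:(by vm_compute) ltac:(by rewrite !inE) ltac:(by rewrite !inE) ltac:(by rewrite !inE) ltac:(by rewrite !inE) ltac:(by rewrite !inE) ltac:(by rewrite !inE).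
  rewrite (Hsw3 N6 N5 P1 P2 N2) in h.
  rewrite (Hsw2 N6 N5 P1 N2 P2) in h.
  rewrite (Hsw3 N6 N5 P1 P2 N4) in h.
  rewrite (Hsw2 N6 N5 P1 N4 P2) in h.
  clear -h h21; nra. }
have h75 : (Dx N6 N5 N2 P2 P3) < 0.
{ have h := Hfac N6 N5 P2 P3 N2 P1 27 ltac:(by vm_compute) ltac:(by rewrite !inE) ltac:(by rewrite !inE) ltac:(by rewrite !inE) ltac:(by rewrite !inE) ltac:(by rewrite !inE) ltac:(by rewrite !inE).
  rewrite (Hsw3 N6 N5 P2 P3 N2) in h.
  rewrite (Hsw2 N6 N5 P2 N2 P3) in h.
  rewrite (Hsw3 N6 N5 P2 P3 P1) in h.
  rewrite (Hsw2 N6 N5 P2 P1 P3) in h.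
  clear -h h100; nra. }
have h85 : (Dx N6 N5 N1 P1 P2) < 0.
{ have h := Hfac N6 N5 P1 P2 N1 N4 25 ltac:(by vm_compute) ltac:(by rewrite !inE) ltac:(by rewrite !inE) ltac:(by rewrite !inE) ltac:(by rewrite !inE) ltac:(by rewrite !inE) ltac:(by rewrite !inE).
  rewrite (Hsw3 N6 N5 P1 P2 N1) in h.
  rewrite (Hsw2 N6 N5 P1 N1 P2) in h.
  rewrite (Hsw3 N6 N5 P1 P2 N4) in h.
  rewrite (Hsw2 N6 N5 P1 N4 P2) in h.
  clear -h h21; nra. }
have h90 : (Dx N6 N5 N1 P2 P3) < 0.
{ have h := Hfac N6 N5 P2 P3 N1 P1 27 ltac:(by vm_compute) ltac:(by rewrite !inE) ltac:(by rewrite !inE) ltac:(by rewrite !inE) ltac:(by rewrite !inE) ltac:(by rewrite !inE) ltac:(by rewrite !inE).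
  rewrite (Hsw3 N6 N5 P2 P3 N1) in h.
  rewrite (Hsw2 N6 N5 P2 N1 P3) in h.
  rewrite (Hsw3 N6 N5 P2 P3 P1) in h.
  rewrite (Hsw2 N6 N5 P2 P1 P3) in h.
  clear -h h100; nra. }
have h179 : (Dx N6 N4 N1 P3 P5) < 0.
{ have h := Hfac N6 N4 N1 P3 P5 N2 40 ltac:(by vm_compute) ltac:(by rewrite !inE) ltac:(by rewrite !inE) ltac:(by rewrite !inE) ltac:(by rewrite !inE) ltac:(by rewrite !inE) ltac:(by rewrite !inE).
  rewrite (Hsw3 N6 N4 N1 P3 N2) in h.
  rewrite (Hsw2 N6 N4 N1 N2 P3) in h.
  clear -h h150; nra. }
have h95 : (Dx N6 N5 N1 P3 P5) < 0.
{ have h := Hfac N6 N1 P3 P5 N5 N4 20 ltac:(by vm_compute) ltac:(by rewrite !inE) ltac:(by rewrite !inE) ltac:(by rewrite !inE) ltac:(by rewrite !inE) ltac:(by rewrite !inE) ltac:(by rewrite !inE).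
  rewrite (Hsw3 N6 N1 P3 P5 N5) in h.
  rewrite (Hsw2 N6 N1 P3 N5 P5) in h.
  rewrite (Hsw1 N6 N1 N5 P3 P5) in h.
  rewrite (Hsw3 N6 N1 P3 P5 N4) in h.
  rewrite (Hsw2 N6 N1 P3 N4 P5) in h.
  rewrite (Hsw1 N6 N1 N4 P3 P5) in h.
  clear -h h179; nra. }
have h111 : (Dx N6 N5 P2 P3 P5) < 0.
{ have h := Hfac N6 N5 P2 P3 P5 P1 27 ltac:(by vm_compute) ltac:(by rewrite !inE) ltac:(by rewrite !inE) ltac:(by rewrite !inE) ltac:(by rewrite !inE) ltac:(by rewrite !inE) ltac:(by rewrite !inE).
  rewrite (Hsw3 N6 N5 P2 P3 P1) in h.
  rewrite (Hsw2 N6 N5 P2 P1 P3) in h.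
  clear -h h100; nra. }
have h148 : (Dx N6 N4 N2 N1 P1) < 0.
{ have h := Hfac N6 N4 N2 N1 P1 N3 36 ltac:(by vm_compute) ltac:(by rewrite !inE) ltac:(by rewrite !inE) ltac:(by rewrite !inE) ltac:(by rewrite !inE) ltac:(by rewrite !inE) ltac:(by rewrite !inE).
  rewrite (Hsw3 N6 N4 N2 N1 N3) in h.
  rewrite (Hsw2 N6 N4 N2 N3 N1) in h.
  clear -h h120; nra. }
have h153 : (Dx N6 N4 N2 N1 P6) < 0.
{ have h := Hfac N6 N4 N2 N1 P6 N3 36 ltac:(by vm_compute) ltac:(by rewrite !inE) ltac:(by rewrite !inE) ltac:(by rewrite !inE) ltac:(by rewrite !inE) ltac:(by rewrite !inE) ltac:(by rewrite !inE).
  rewrite (Hsw3 N6 N4 N2 N1 N3) in h.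
  rewrite (Hsw2 N6 N4 N2 N3 N1) in h.
  clear -h h120; nra. }
have h125 : (Dx N6 N4 N3 N2 P5) < 0.
{ have h := Hfac N6 N4 N3 N2 P5 N5 38 ltac:(by vm_compute) ltac:(by rewrite !inE) ltac:(by rewrite !inE) ltac:(by rewrite !inE) ltac:(by rewrite !inE) ltac:(by rewrite !inE) ltac:(by rewrite !inE).
  rewrite (Hsw3 N6 N4 N3 N2 N5) in h.
  rewrite (Hsw2 N6 N4 N3 N5 N2) in h.
  rewrite (Hsw1 N6 N4 N5 N3 N2) in h.
  clear -h h0; nra. }
have h549 : 0 < (Dx N4 N3 N2 P1 P5).
{ have h := Hfac N4 N3 N2 P5 P1 N6 41 ltac:(by vm_compute) ltac:(by rewrite !inE) ltac:(by rewrite !inE) ltac:(by rewrite !inE) ltac:(by rewrite !inE) ltac:(by rewrite !inE) ltac:(by rewrite !inE).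
  rewrite (Hsw3 N4 N3 N2 P5 P1) in h.
  rewrite (Hsw3 N4 N3 N2 P5 N6) in h.
  rewrite (Hsw2 N4 N3 N2 N6 P5) in h.
  rewrite (Hsw1 N4 N3 N6 N2 P5) in h.
  rewrite (Hsw0 N4 N6 N3 N2 P5) in h.
  clear -h h125; nra. }
have h616 : 0 < (Dx N4 N2 P1 P3 P5).
{ have h := Hfac N4 N2 P1 P5 P3 N3 42 ltac:(by vm_compute) ltac:(by rewrite !inE) ltac:(by rewrite !inE) ltac:(by rewrite !inE) ltac:(by rewrite !inE) ltac:(by rewrite !inE) ltac:(by rewrite !inE).
  rewrite (Hsw3 N4 N2 P1 P5 P3) in h.
  rewrite (Hsw3 N4 N2 P1 P5 N3) in h.
  rewrite (Hsw2 N4 N2 P1 N3 P5) in h.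
  rewrite (Hsw1 N4 N2 N3 P1 P5) in h.
  clear -h h549; nra. }
have h155 : 0 < (Dx N6 N4 N2 P1 P3).
{ have h := Hfac N4 N2 P1 P3 N6 P5 23 ltac:(by vm_compute) ltac:(by rewrite !inE) ltac:(by rewrite !inE) ltac:(by rewrite !inE) ltac:(by rewrite !inE) ltac:(by rewrite !inE) ltac:(by rewrite !inE).
  rewrite (Hsw3 N4 N2 P1 P3 N6) in h.
  rewrite (Hsw2 N4 N2 P1 N6 P3) in h.
  rewrite (Hsw1 N4 N2 N6 P1 P3) in h.
  rewrite (Hsw0 N4 N6 N2 P1 P3) in h.
  clear -h h616; nra. }
have h157 : (Dx N6 N4 N2 P1 P5) < 0.
{ have h := Hfac N4 N2 P1 P5 N6 N3 42 ltac:(by vm_compute) ltac:(by rewrite !inE) ltac:(by rewrite !inE) ltac:(by rewrite !inE) ltac:(by rewrite !inE) ltac:(by rewrite !inE) ltac:(by rewrite !inE).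
  rewrite (Hsw3 N4 N2 P1 P5 N6) in h.
  rewrite (Hsw2 N4 N2 P1 N6 P5) in h.
  rewrite (Hsw1 N4 N2 N6 P1 P5) in h.
  rewrite (Hsw0 N4 N6 N2 P1 P5) in h.
  rewrite (Hsw3 N4 N2 P1 P5 N3) in h.
  rewrite (Hsw2 N4 N2 P1 N3 P5) in h.
  rewrite (Hsw1 N4 N2 N3 P1 P5) in h.
  clear -h h549; nra. }
have h180 : (Dx N6 N4 N1 P3 P6) < 0.
{ have h := Hfac N6 N4 N1 P3 P6 N2 40 ltac:(by vm_compute) ltac:(by rewrite !inE) ltac:(by rewrite !inE) ltac:(by rewrite !inE) ltac:(by rewrite !inE) ltac:(by rewrite !inE) ltac:(by rewrite !inE).
  rewrite (Hsw3 N6 N4 N1 P3 N2) in h.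
  rewrite (Hsw2 N6 N4 N1 N2 P3) in h.
  clear -h h150; nra. }
have h403 : 0 < (Dx N5 N4 P1 P5 P6).
{ have h := Hfac N5 N4 P1 P6 P5 N6 7 ltac:(by vm_compute) ltac:(by rewrite !inE) ltac:(by rewrite !inE) ltac:(by rewrite !inE) ltac:(by rewrite !inE) ltac:(by rewrite !inE) ltac:(by rewrite !inE).
  rewrite (Hsw3 N5 N4 P1 P6 P5) in h.
  rewrite (Hsw3 N5 N4 P1 P6 N6) in h.
  rewrite (Hsw2 N5 N4 P1 N6 P6) in h.
  rewrite (Hsw1 N5 N4 N6 P1 P6) in h.
  rewrite (Hsw0 N5 N6 N4 P1 P6) in h.
  clear -h h25; nra. }
have h193 : 0 < (Dx N6 N4 P1 P5 P6).
{ have h := Hfac N4 P1 P5 P6 N6 N5 6 ltac:(by vm_compute) ltac:(by rewrite !inE) ltac:(by rewrite !inE) ltac:(by rewrite !inE) ltac:(by rewrite !inE) ltac:(by rewrite !inE) ltac:(by rewrite !inE).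
  rewrite (Hsw3 N4 P1 P5 P6 N6) in h.
  rewrite (Hsw2 N4 P1 P5 N6 P6) in h.
  rewrite (Hsw1 N4 P1 N6 P5 P6) in h.
  rewrite (Hsw0 N4 N6 P1 P5 P6) in h.
  rewrite (Hsw3 N4 P1 P5 P6 N5) in h.
  rewrite (Hsw2 N4 P1 P5 N5 P6) in h.
  rewrite (Hsw1 N4 P1 N5 P5 P6) in h.
  rewrite (Hsw0 N4 N5 P1 P5 P6) in h.
  clear -h h403; nra. }
have h417 : 0 < (Dx N5 N3 N2 N1 P4).
{ have h := Hfac N5 N3 N2 N1 P4 N6 33 ltac:(by vm_compute) ltac:(by rewrite !inE) ltac:(by rewrite !inE) ltac:(by rewrite !inE) ltac:(by rewrite !inE) ltac:(by rewrite !inE) ltac:(by rewrite !inE).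
  rewrite (Hsw3 N5 N3 N2 N1 N6) in h.
  rewrite (Hsw2 N5 N3 N2 N6 N1) in h.
  rewrite (Hsw1 N5 N3 N6 N2 N1) in h.
  rewrite (Hsw0 N5 N6 N3 N2 N1) in h.
  clear -h h36; nra. }
have h679 : 0 < (Dx N3 N2 N1 P4 P6).
{ have h := Hfac N3 N2 N1 P4 P6 N5 46 ltac:(by vm_compute) ltac:(by rewrite !inE) ltac:(by rewrite !inE) ltac:(by rewrite !inE) ltac:(by rewrite !inE) ltac:(by rewrite !inE) ltac:(by rewrite !inE).
  rewrite (Hsw3 N3 N2 N1 P4 N5) in h.
  rewrite (Hsw2 N3 N2 N1 N5 P4) in h.
  rewrite (Hsw1 N3 N2 N5 N1 P4) in h.
  rewrite (Hsw0 N3 N5 N2 N1 P4) in h.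
  clear -h h417; nra. }
have h223 : 0 < (Dx N6 N3 N2 P4 P6).
{ have h := Hfac N3 N2 P4 P6 N6 N1 15 ltac:(by vm_compute) ltac:(by rewrite !inE) ltac:(by rewrite !inE) ltac:(by rewrite !inE) ltac:(by rewrite !inE) ltac:(by rewrite !inE) ltac:(by rewrite !inE).
  rewrite (Hsw3 N3 N2 P4 P6 N6) in h.
  rewrite (Hsw2 N3 N2 P4 N6 P6) in h.
  rewrite (Hsw1 N3 N2 N6 P4 P6) in h.
  rewrite (Hsw0 N3 N6 N2 P4 P6) in h.
  rewrite (Hsw3 N3 N2 P4 P6 N1) in h.
  rewrite (Hsw2 N3 N2 P4 N1 P6) in h.
  clear -h h679; nra. }
have h560 : (Dx N4 N3 N2 P5 P6) < 0.
{ have h := Hfac N4 N3 N2 P5 P6 N6 41 ltac:(by vm_compute) ltac:(by rewrite !inE) ltac:(by rewrite !inE) ltac:(by rewrite !inE) ltac:(by rewrite !inE) ltac:(by rewrite !inE) ltac:(by rewrite !inE).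
  rewrite (Hsw3 N4 N3 N2 P5 N6) in h.
  rewrite (Hsw2 N4 N3 N2 N6 P5) in h.
  rewrite (Hsw1 N4 N3 N6 N2 P5) in h.
  rewrite (Hsw0 N4 N6 N3 N2 P5) in h.
  clear -h h125; nra. }
have h224 : (Dx N6 N3 N2 P5 P6) < 0.
{ have h := Hfac N3 N2 P5 P6 N6 N4 3 ltac:(by vm_compute) ltac:(by rewrite !inE) ltac:(by rewrite !inE) ltac:(by rewrite !inE) ltac:(by rewrite !inE) ltac:(by rewrite !inE) ltac:(by rewrite !inE).
  rewrite (Hsw3 N3 N2 P5 P6 N6) in h.
  rewrite (Hsw2 N3 N2 P5 N6 P6) in h.
  rewrite (Hsw1 N3 N2 N6 P5 P6) in h.
  rewrite (Hsw0 N3 N6 N2 P5 P6) in h.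
  rewrite (Hsw3 N3 N2 P5 P6 N4) in h.
  rewrite (Hsw2 N3 N2 P5 N4 P6) in h.
  rewrite (Hsw1 N3 N2 N4 P5 P6) in h.
  rewrite (Hsw0 N3 N4 N2 P5 P6) in h.
  clear -h h560; nra. }
have h458 : (Dx N5 N3 P1 P4 P6) < 0.
{ have h := Hfac N5 N3 P1 P6 P4 N4 44 ltac:(by vm_compute) ltac:(by rewrite !inE) ltac:(by rewrite !inE) ltac:(by rewrite !inE) ltac:(by rewrite !inE) ltac:(by rewrite !inE) ltac:(by rewrite !inE).
  rewrite (Hsw3 N5 N3 P1 P6 P4) in h.
  rewrite (Hsw3 N5 N3 P1 P6 N4) in h.
  rewrite (Hsw2 N5 N3 P1 N4 P6) in h.
  rewrite (Hsw1 N5 N3 N4 P1 P6) in h.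
  clear -h h347; nra. }
have h248 : (Dx N6 N3 P1 P4 P6) < 0.
{ have h := Hfac N3 P1 P4 P6 N6 N5 16 ltac:(by vm_compute) ltac:(by rewrite !inE) ltac:(by rewrite !inE) ltac:(by rewrite !inE) ltac:(by rewrite !inE) ltac:(by rewrite !inE) ltac:(by rewrite !inE).
  rewrite (Hsw3 N3 P1 P4 P6 N6) in h.
  rewrite (Hsw2 N3 P1 P4 N6 P6) in h.
  rewrite (Hsw1 N3 P1 N6 P4 P6) in h.
  rewrite (Hsw0 N3 N6 P1 P4 P6) in h.
  rewrite (Hsw3 N3 P1 P4 P6 N5) in h.
  rewrite (Hsw2 N3 P1 P4 N5 P6) in h.
  rewrite (Hsw1 N3 P1 N5 P4 P6) in h.
  rewrite (Hsw0 N3 N5 P1 P4 P6) in h.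
  clear -h h458; nra. }
have h270 : (Dx N6 N2 N1 P3 P5) < 0.
{ have h := Hfac N6 N1 P3 P5 N2 N4 20 ltac:(by vm_compute) ltac:(by rewrite !inE) ltac:(by rewrite !inE) ltac:(by rewrite !inE) ltac:(by rewrite !inE) ltac:(by rewrite !inE) ltac:(by rewrite !inE).
  rewrite (Hsw3 N6 N1 P3 P5 N2) in h.
  rewrite (Hsw2 N6 N1 P3 N2 P5) in h.
  rewrite (Hsw1 N6 N1 N2 P3 P5) in h.
  rewrite (Hsw3 N6 N1 P3 P5 N4) in h.
  rewrite (Hsw2 N6 N1 P3 N4 P5) in h.
  rewrite (Hsw1 N6 N1 N4 P3 P5) in h.
  clear -h h179; nra. }
have h680 : (Dx N3 N2 N1 P5 P6) < 0.
{ have h := Hfac N3 N2 P5 P6 N1 N4 3 ltac:(by vm_compute) ltac:(by rewrite !inE) ltac:(by rewrite !inE) ltac:(by rewrite !inE) ltac:(by rewrite !inE) ltac:(by rewrite !inE) ltac:(by rewrite !inE).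
  rewrite (Hsw3 N3 N2 P5 P6 N1) in h.
  rewrite (Hsw2 N3 N2 P5 N1 P6) in h.
  rewrite (Hsw3 N3 N2 P5 P6 N4) in h.
  rewrite (Hsw2 N3 N2 P5 N4 P6) in h.
  rewrite (Hsw1 N3 N2 N4 P5 P6) in h.
  rewrite (Hsw0 N3 N4 N2 P5 P6) in h.
  clear -h h560; nra. }
have h274 : (Dx N6 N2 N1 P5 P6) < 0.
{ have h := Hfac N2 N1 P5 P6 N6 N3 1 ltac:(by vm_compute) ltac:(by rewrite !inE) ltac:(by rewrite !inE) ltac:(by rewrite !inE) ltac:(by rewrite !inE) ltac:(by rewrite !inE) ltac:(by rewrite !inE).
  rewrite (Hsw3 N2 N1 P5 P6 N6) in h.
  rewrite (Hsw2 N2 N1 P5 N6 P6) in h.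
  rewrite (Hsw1 N2 N1 N6 P5 P6) in h.
  rewrite (Hsw0 N2 N6 N1 P5 P6) in h.
  rewrite (Hsw3 N2 N1 P5 P6 N3) in h.
  rewrite (Hsw2 N2 N1 P5 N3 P6) in h.
  rewrite (Hsw1 N2 N1 N3 P5 P6) in h.
  rewrite (Hsw0 N2 N3 N1 P5 P6) in h.
  clear -h h680; nra. }
have h11 : 0 < (Dx N6 N5 N4 N2 P3).
{ have h := HGP N6 N5 N4 N3 N2 N1 P3.
  clear -h h0 h1 h17 h4 h8; nra. }
have h31 : (Dx N6 N5 N4 P3 P5) < 0.
{ have h := HGP N6 N5 P3 N4 N1 P2 P5.
  rewrite (Hsw2 N6 N5 P3 N4 N1) in h.
  rewrite (Hsw3 N6 N5 N4 P3 N1) in h.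
  rewrite (Hsw2 N6 N5 P3 P2 P5) in h.
  rewrite (Hsw2 N6 N5 P3 N4 P2) in h.
  rewrite (Hsw3 N6 N5 N4 P3 P2) in h.
  rewrite (Hsw2 N6 N5 P3 N1 P5) in h.
  rewrite (Hsw2 N6 N5 P3 N4 P5) in h.
  rewrite (Hsw2 N6 N5 P3 N1 P2) in h.
  rewrite (Hsw3 N6 N5 N1 P3 P2) in h.
  clear -h h111 h17 h26 h90 h95; nra. }
have h105 : (Dx N6 N5 P1 P3 P5) < 0.
{ have h := HGP N6 N5 P3 N4 P1 P2 P5.
  rewrite (Hsw2 N6 N5 P3 N4 P1) in h.
  rewrite (Hsw3 N6 N5 N4 P3 P1) in h.
  rewrite (Hsw2 N6 N5 P3 P2 P5) in h.
  rewrite (Hsw2 N6 N5 P3 N4 P2) in h.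
  rewrite (Hsw3 N6 N5 N4 P3 P2) in h.
  rewrite (Hsw2 N6 N5 P3 P1 P5) in h.
  rewrite (Hsw2 N6 N5 P3 N4 P5) in h.
  rewrite (Hsw2 N6 N5 P3 P1 P2) in h.
  rewrite (Hsw3 N6 N5 P1 P3 P2) in h.
  clear -h h100 h111 h22 h26 h31; nra. }
have h10 : 0 < (Dx N6 N5 N4 N2 P2).
{ have h := HGP N6 N5 N4 N3 N2 P2 P3.
  clear -h h0 h11 h26 h3 h4; nra. }
have h71 : (Dx N6 N5 N2 P1 P3) < 0.
{ have h := HGP N6 N5 N2 N4 P1 P2 P3.
  rewrite (Hsw2 N6 N5 N2 N4 P1) in h.
  rewrite (Hsw2 N6 N5 N2 N4 P2) in h.
  rewrite (Hsw2 N6 N5 N2 N4 P3) in h.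
  clear -h h10 h11 h70 h75 h9; nra. }
have h16 : 0 < (Dx N6 N5 N4 N1 P2).
{ have h := HGP N6 N5 N4 N3 N1 P2 P3.
  clear -h h1 h17 h26 h3 h4; nra. }
have h86 : (Dx N6 N5 N1 P1 P3) < 0.
{ have h := HGP N6 N5 N1 N4 P1 P2 P3.
  rewrite (Hsw2 N6 N5 N1 N4 P1) in h.
  rewrite (Hsw2 N6 N5 N1 N4 P2) in h.
  rewrite (Hsw2 N6 N5 N1 N4 P3) in h.
  clear -h h15 h16 h17 h85 h90; nra. }
have h80 : (Dx N6 N5 N2 P3 P5) < 0.
{ have h := HGP N6 N5 P3 N2 N1 P1 P5.
  rewrite (Hsw2 N6 N5 P3 N2 N1) in h.
  rewrite (Hsw3 N6 N5 N2 P3 N1) in h.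
  rewrite (Hsw2 N6 N5 P3 P1 P5) in h.
  rewrite (Hsw2 N6 N5 P3 N2 P1) in h.
  rewrite (Hsw3 N6 N5 N2 P3 P1) in h.
  rewrite (Hsw2 N6 N5 P3 N1 P5) in h.
  rewrite (Hsw2 N6 N5 P3 N2 P5) in h.
  rewrite (Hsw2 N6 N5 P3 N1 P1) in h.
  rewrite (Hsw3 N6 N5 N1 P3 P1) in h.
  clear -h h105 h66 h71 h86 h95; nra. }
have h189 : 0 < (Dx N6 N4 P1 P3 P5).
{ have h := HGP N6 N4 P1 N5 N2 P3 P5.
  rewrite (Hsw2 N6 N4 P1 N5 N2) in h.
  rewrite (Hsw3 N6 N4 N5 P1 N2) in h.
  rewrite (Hsw1 N6 N4 N5 N2 P1) in h.
  rewrite (Hsw2 N6 N4 P1 N5 P3) in h.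
  rewrite (Hsw1 N6 N4 N5 P1 P3) in h.
  rewrite (Hsw2 N6 N4 P1 N2 P5) in h.
  rewrite (Hsw2 N6 N4 P1 N5 P5) in h.
  rewrite (Hsw1 N6 N4 N5 P1 P5) in h.
  rewrite (Hsw2 N6 N4 P1 N2 P3) in h.
  clear -h h155 h157 h22 h24 h9; nra. }
have h190 : 0 < (Dx N6 N4 P1 P3 P6).
{ have h := HGP N6 N4 P1 N5 P3 P5 P6.
  rewrite (Hsw2 N6 N4 P1 N5 P3) in h.
  rewrite (Hsw1 N6 N4 N5 P1 P3) in h.
  rewrite (Hsw2 N6 N4 P1 N5 P5) in h.
  rewrite (Hsw1 N6 N4 N5 P1 P5) in h.
  rewrite (Hsw2 N6 N4 P1 N5 P6) in h.
  rewrite (Hsw1 N6 N4 N5 P1 P6) in h.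
  clear -h h189 h193 h22 h24 h25; nra. }
have h158 : (Dx N6 N4 N2 P1 P6) < 0.
{ have h := HGP N6 N4 P1 N5 N2 P5 P6.
  rewrite (Hsw2 N6 N4 P1 N5 N2) in h.
  rewrite (Hsw3 N6 N4 N5 P1 N2) in h.
  rewrite (Hsw1 N6 N4 N5 N2 P1) in h.
  rewrite (Hsw2 N6 N4 P1 N5 P5) in h.
  rewrite (Hsw1 N6 N4 N5 P1 P5) in h.
  rewrite (Hsw2 N6 N4 P1 N2 P6) in h.
  rewrite (Hsw2 N6 N4 P1 N5 P6) in h.
  rewrite (Hsw1 N6 N4 N5 P1 P6) in h.
  rewrite (Hsw2 N6 N4 P1 N2 P5) in h.
  clear -h h157 h193 h24 h25 h9; nra. }
have h172 : (Dx N6 N4 N1 P1 P5) < 0.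
{ have h := HGP N6 N4 P1 N5 N2 N1 P5.
  rewrite (Hsw2 N6 N4 P1 N5 N2) in h.
  rewrite (Hsw3 N6 N4 N5 P1 N2) in h.
  rewrite (Hsw1 N6 N4 N5 N2 P1) in h.
  rewrite (Hsw2 N6 N4 P1 N1 P5) in h.
  rewrite (Hsw2 N6 N4 P1 N5 N1) in h.
  rewrite (Hsw3 N6 N4 N5 P1 N1) in h.
  rewrite (Hsw1 N6 N4 N5 N1 P1) in h.
  rewrite (Hsw2 N6 N4 P1 N2 P5) in h.
  rewrite (Hsw2 N6 N4 P1 N5 P5) in h.
  rewrite (Hsw1 N6 N4 N5 P1 P5) in h.
  rewrite (Hsw2 N6 N4 P1 N2 N1) in h.
  rewrite (Hsw3 N6 N4 N2 P1 N1) in h.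
  clear -h h148 h15 h157 h24 h9; nra. }
have h173 : (Dx N6 N4 N1 P1 P6) < 0.
{ have h := HGP N6 N4 P1 N5 N1 P5 P6.
  rewrite (Hsw2 N6 N4 P1 N5 N1) in h.
  rewrite (Hsw3 N6 N4 N5 P1 N1) in h.
  rewrite (Hsw1 N6 N4 N5 N1 P1) in h.
  rewrite (Hsw2 N6 N4 P1 N5 P5) in h.
  rewrite (Hsw1 N6 N4 N5 P1 P5) in h.
  rewrite (Hsw2 N6 N4 P1 N1 P6) in h.
  rewrite (Hsw2 N6 N4 P1 N5 P6) in h.
  rewrite (Hsw1 N6 N4 N5 P1 P6) in h.
  rewrite (Hsw2 N6 N4 P1 N1 P5) in h.
  clear -h h15 h172 h193 h24 h25; nra. }
have h165 : (Dx N6 N4 N2 P3 P6) < 0.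
{ have h := HGP N6 N4 P6 N2 N1 P1 P3.
  rewrite (Hsw2 N6 N4 P6 N2 N1) in h.
  rewrite (Hsw3 N6 N4 N2 P6 N1) in h.
  rewrite (Hsw2 N6 N4 P6 P1 P3) in h.
  rewrite (Hsw3 N6 N4 P1 P6 P3) in h.
  rewrite (Hsw2 N6 N4 P6 N2 P1) in h.
  rewrite (Hsw3 N6 N4 N2 P6 P1) in h.
  rewrite (Hsw2 N6 N4 P6 N1 P3) in h.
  rewrite (Hsw3 N6 N4 N1 P6 P3) in h.
  rewrite (Hsw2 N6 N4 P6 N2 P3) in h.
  rewrite (Hsw3 N6 N4 N2 P6 P3) in h.
  rewrite (Hsw2 N6 N4 P6 N1 P1) in h.
  rewrite (Hsw3 N6 N4 N1 P6 P1) in h.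
  clear -h h153 h158 h173 h180 h190; nra. }
have h50 : (Dx N6 N5 N3 P1 P3) < 0.
{ have h := HGP N6 N5 N3 N4 P1 P2 P3.
  rewrite (Hsw2 N6 N5 N3 N4 P1) in h.
  rewrite (Hsw2 N6 N5 N3 N4 P2) in h.
  rewrite (Hsw2 N6 N5 N3 N4 P3) in h.
  clear -h h2 h3 h4 h49 h54; nra. }
have h106 : (Dx N6 N5 P1 P3 P6) < 0.
{ have h := HGP N6 N5 P1 N4 N3 P3 P6.
  rewrite (Hsw2 N6 N5 P1 N4 N3) in h.
  rewrite (Hsw3 N6 N5 N4 P1 N3) in h.
  rewrite (Hsw2 N6 N5 P1 N4 P3) in h.
  rewrite (Hsw2 N6 N5 P1 N3 P6) in h.
  rewrite (Hsw2 N6 N5 P1 N4 P6) in h.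
  rewrite (Hsw2 N6 N5 P1 N3 P3) in h.
  clear -h h2 h22 h25 h50 h53; nra. }
have h60 : 0 < (Dx N6 N5 N3 P3 P6).
{ have h := HGP N6 N5 N3 N4 P1 P3 P6.
  rewrite (Hsw2 N6 N5 N3 N4 P1) in h.
  rewrite (Hsw2 N6 N5 N3 N4 P3) in h.
  rewrite (Hsw2 N6 N5 N3 N4 P6) in h.
  clear -h h2 h4 h50 h53 h7; nra. }
have h81 : 0 < (Dx N6 N5 N2 P3 P6).
{ have h := HGP N6 N5 P3 N3 N2 P1 P6.
  rewrite (Hsw2 N6 N5 P3 N3 N2) in h.
  rewrite (Hsw3 N6 N5 N3 P3 N2) in h.
  rewrite (Hsw2 N6 N5 P3 P1 P6) in h.
  rewrite (Hsw2 N6 N5 P3 N3 P1) in h.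
  rewrite (Hsw3 N6 N5 N3 P3 P1) in h.
  rewrite (Hsw2 N6 N5 P3 N2 P6) in h.
  rewrite (Hsw2 N6 N5 P3 N3 P6) in h.
  rewrite (Hsw2 N6 N5 P3 N2 P1) in h.
  rewrite (Hsw3 N6 N5 N2 P3 P1) in h.
  clear -h h106 h39 h50 h60 h71; nra. }
have h19 : 0 < (Dx N6 N5 N4 N1 P5).
{ have h := HGP N6 N5 N1 N4 N2 P3 P5.
  rewrite (Hsw2 N6 N5 N1 N4 N2) in h.
  rewrite (Hsw3 N6 N5 N4 N1 N2) in h.
  rewrite (Hsw2 N6 N5 N1 N4 P3) in h.
  rewrite (Hsw2 N6 N5 N1 N2 P5) in h.
  rewrite (Hsw2 N6 N5 N1 N4 P5) in h.
  rewrite (Hsw2 N6 N5 N1 N2 P3) in h.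
  clear -h h17 h66 h68 h8 h95; nra. }
have h88 : (Dx N6 N5 N1 P1 P5) < 0.
{ have h := HGP N6 N5 N1 N4 P1 P3 P5.
  rewrite (Hsw2 N6 N5 N1 N4 P1) in h.
  rewrite (Hsw2 N6 N5 N1 N4 P3) in h.
  rewrite (Hsw2 N6 N5 N1 N4 P5) in h.
  clear -h h15 h17 h19 h86 h95; nra. }
have h43 : 0 < (Dx N6 N5 N3 N1 P1).
{ have h := HGP N6 N5 N3 N4 N1 P1 P2.
  rewrite (Hsw2 N6 N5 N3 N4 N1) in h.
  rewrite (Hsw2 N6 N5 N3 N4 P1) in h.
  rewrite (Hsw2 N6 N5 N3 N4 P2) in h.
  clear -h h1 h2 h3 h44 h49; nra. }
have h47 : 0 < (Dx N6 N5 N3 N1 P5).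
{ have h := HGP N6 N5 N1 N3 N2 P1 P5.
  rewrite (Hsw2 N6 N5 N1 N3 N2) in h.
  rewrite (Hsw3 N6 N5 N3 N1 N2) in h.
  rewrite (Hsw2 N6 N5 N1 N3 P1) in h.
  rewrite (Hsw2 N6 N5 N1 N2 P5) in h.
  rewrite (Hsw2 N6 N5 N1 N3 P5) in h.
  rewrite (Hsw2 N6 N5 N1 N2 P1) in h.
  clear -h h36 h43 h64 h68 h88; nra. }
have h13 : 0 < (Dx N6 N5 N4 N2 P5).
{ have h := HGP N6 N5 P5 N4 N3 N2 N1.
  rewrite (Hsw2 N6 N5 P5 N4 N3) in h.
  rewrite (Hsw3 N6 N5 N4 P5 N3) in h.
  rewrite (Hsw2 N6 N5 P5 N2 N1) in h.
  rewrite (Hsw3 N6 N5 N2 P5 N1) in h.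
  rewrite (Hsw2 N6 N5 P5 N4 N2) in h.
  rewrite (Hsw3 N6 N5 N4 P5 N2) in h.
  rewrite (Hsw2 N6 N5 P5 N3 N1) in h.
  rewrite (Hsw3 N6 N5 N3 P5 N1) in h.
  rewrite (Hsw2 N6 N5 P5 N4 N1) in h.
  rewrite (Hsw3 N6 N5 N4 P5 N1) in h.
  rewrite (Hsw2 N6 N5 P5 N3 N2) in h.
  rewrite (Hsw3 N6 N5 N3 P5 N2) in h.
  clear -h h19 h41 h47 h6 h68; nra. }
have h164 : (Dx N6 N4 N2 P3 P5) < 0.
{ have h := HGP N6 N4 N2 N5 P1 P3 P5.
  rewrite (Hsw2 N6 N4 N2 N5 P1) in h.
  rewrite (Hsw1 N6 N4 N5 N2 P1) in h.
  rewrite (Hsw2 N6 N4 N2 N5 P3) in h.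
  rewrite (Hsw1 N6 N4 N5 N2 P3) in h.
  rewrite (Hsw2 N6 N4 N2 N5 P5) in h.
  rewrite (Hsw1 N6 N4 N5 N2 P5) in h.
  clear -h h11 h13 h155 h157 h9; nra. }
have h293 : 0 < (Dx N6 N2 P3 P5 P6).
{ have h := HGP N6 N2 P3 N5 N4 P5 P6.
  rewrite (Hsw2 N6 N2 P3 N5 N4) in h.
  rewrite (Hsw3 N6 N2 N5 P3 N4) in h.
  rewrite (Hsw1 N6 N2 N5 N4 P3) in h.
  rewrite (Hsw2 N6 N5 N2 N4 P3) in h.
  rewrite (Hsw2 N6 N2 P3 N5 P5) in h.
  rewrite (Hsw1 N6 N2 N5 P3 P5) in h.
  rewrite (Hsw2 N6 N2 P3 N4 P6) in h.
  rewrite (Hsw1 N6 N2 N4 P3 P6) in h.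
  rewrite (Hsw2 N6 N2 P3 N5 P6) in h.
  rewrite (Hsw1 N6 N2 N5 P3 P6) in h.
  rewrite (Hsw2 N6 N2 P3 N4 P5) in h.
  rewrite (Hsw1 N6 N2 N4 P3 P5) in h.
  clear -h h11 h164 h165 h80 h81; nra. }
have h73 : (Dx N6 N5 N2 P1 P5) < 0.
{ have h := HGP N6 N5 P1 N4 N2 N1 P5.
  rewrite (Hsw2 N6 N5 P1 N4 N2) in h.
  rewrite (Hsw3 N6 N5 N4 P1 N2) in h.
  rewrite (Hsw2 N6 N5 P1 N1 P5) in h.
  rewrite (Hsw2 N6 N5 P1 N4 N1) in h.
  rewrite (Hsw3 N6 N5 N4 P1 N1) in h.
  rewrite (Hsw2 N6 N5 P1 N2 P5) in h.
  rewrite (Hsw2 N6 N5 P1 N4 P5) in h.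
  rewrite (Hsw2 N6 N5 P1 N2 N1) in h.
  rewrite (Hsw3 N6 N5 N2 P1 N1) in h.
  clear -h h15 h24 h64 h88 h9; nra. }
have h74 : 0 < (Dx N6 N5 N2 P1 P6).
{ have h := HGP N6 N5 P1 N4 N3 N2 P6.
  rewrite (Hsw2 N6 N5 P1 N4 N3) in h.
  rewrite (Hsw3 N6 N5 N4 P1 N3) in h.
  rewrite (Hsw2 N6 N5 P1 N2 P6) in h.
  rewrite (Hsw2 N6 N5 P1 N4 N2) in h.
  rewrite (Hsw3 N6 N5 N4 P1 N2) in h.
  rewrite (Hsw2 N6 N5 P1 N3 P6) in h.
  rewrite (Hsw2 N6 N5 P1 N4 P6) in h.
  rewrite (Hsw2 N6 N5 P1 N3 N2) in h.
  rewrite (Hsw3 N6 N5 N3 P1 N2) in h.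
  clear -h h2 h25 h37 h53 h9; nra. }
have h284 : 0 < (Dx N6 N2 P1 P5 P6).
{ have h := HGP N6 N2 P1 N5 N4 P5 P6.
  rewrite (Hsw2 N6 N2 P1 N5 N4) in h.
  rewrite (Hsw3 N6 N2 N5 P1 N4) in h.
  rewrite (Hsw1 N6 N2 N5 N4 P1) in h.
  rewrite (Hsw2 N6 N5 N2 N4 P1) in h.
  rewrite (Hsw2 N6 N2 P1 N5 P5) in h.
  rewrite (Hsw1 N6 N2 N5 P1 P5) in h.
  rewrite (Hsw2 N6 N2 P1 N4 P6) in h.
  rewrite (Hsw1 N6 N2 N4 P1 P6) in h.
  rewrite (Hsw2 N6 N2 P1 N5 P6) in h.
  rewrite (Hsw1 N6 N2 N5 P1 P6) in h.
  rewrite (Hsw2 N6 N2 P1 N4 P5) in h.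
  rewrite (Hsw1 N6 N2 N4 P1 P5) in h.
  clear -h h157 h158 h73 h74 h9; nra. }
have h51 : (Dx N6 N5 N3 P1 P4) < 0.
{ have h := HGP N6 N5 N3 N4 P1 P3 P4.
  rewrite (Hsw2 N6 N5 N3 N4 P1) in h.
  rewrite (Hsw2 N6 N5 N3 N4 P3) in h.
  rewrite (Hsw2 N6 N5 N3 N4 P4) in h.
  clear -h h2 h4 h5 h50 h58; nra. }
have h62 : 0 < (Dx N6 N5 N3 P4 P6).
{ have h := HGP N6 N5 N3 N4 P1 P4 P6.
  rewrite (Hsw2 N6 N5 N3 N4 P1) in h.
  rewrite (Hsw2 N6 N5 N3 N4 P4) in h.
  rewrite (Hsw2 N6 N5 N3 N4 P6) in h.
  clear -h h2 h5 h51 h53 h7; nra. }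
have h214 : 0 < (Dx N6 N3 N2 P1 P6).
{ have h := HGP N6 N3 P6 N5 N2 P1 P4.
  rewrite (Hsw2 N6 N3 P6 N5 N2) in h.
  rewrite (Hsw3 N6 N3 N5 P6 N2) in h.
  rewrite (Hsw1 N6 N3 N5 N2 P6) in h.
  rewrite (Hsw2 N6 N3 P6 P1 P4) in h.
  rewrite (Hsw3 N6 N3 P1 P6 P4) in h.
  rewrite (Hsw2 N6 N3 P6 N5 P1) in h.
  rewrite (Hsw3 N6 N3 N5 P6 P1) in h.
  rewrite (Hsw1 N6 N3 N5 P1 P6) in h.
  rewrite (Hsw2 N6 N3 P6 N2 P4) in h.
  rewrite (Hsw3 N6 N3 N2 P6 P4) in h.
  rewrite (Hsw2 N6 N3 P6 N5 P4) in h.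
  rewrite (Hsw3 N6 N3 N5 P6 P4) in h.
  rewrite (Hsw1 N6 N3 N5 P4 P6) in h.
  rewrite (Hsw2 N6 N3 P6 N2 P1) in h.
  rewrite (Hsw3 N6 N3 N2 P6 P1) in h.
  clear -h h223 h248 h42 h53 h62; nra. }
have h84 : (Dx N6 N5 N2 P5 P6) < 0.
{ have h := HGP N6 N2 P6 N5 N3 P1 P5.
  rewrite (Hsw2 N6 N2 P6 N5 N3) in h.
  rewrite (Hsw3 N6 N2 N5 P6 N3) in h.
  rewrite (Hsw1 N6 N2 N5 N3 P6) in h.
  rewrite (Hsw2 N6 N5 N2 N3 P6) in h.
  rewrite (Hsw2 N6 N2 P6 P1 P5) in h.
  rewrite (Hsw3 N6 N2 P1 P6 P5) in h.
  rewrite (Hsw2 N6 N2 P6 N5 P1) in h.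
  rewrite (Hsw3 N6 N2 N5 P6 P1) in h.
  rewrite (Hsw1 N6 N2 N5 P1 P6) in h.
  rewrite (Hsw2 N6 N2 P6 N3 P5) in h.
  rewrite (Hsw3 N6 N2 N3 P6 P5) in h.
  rewrite (Hsw1 N6 N2 N3 P5 P6) in h.
  rewrite (Hsw2 N6 N2 P6 N5 P5) in h.
  rewrite (Hsw3 N6 N2 N5 P6 P5) in h.
  rewrite (Hsw1 N6 N2 N5 P5 P6) in h.
  rewrite (Hsw2 N6 N2 P6 N3 P1) in h.
  rewrite (Hsw3 N6 N2 N3 P6 P1) in h.
  rewrite (Hsw1 N6 N2 N3 P1 P6) in h.
  clear -h h214 h224 h284 h42 h74; nra. }
have h271 : (Dx N6 N2 N1 P3 P6) < 0.
{ have h := HGP N6 N2 N1 N5 P3 P5 P6.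
  rewrite (Hsw2 N6 N2 N1 N5 P3) in h.
  rewrite (Hsw1 N6 N2 N5 N1 P3) in h.
  rewrite (Hsw2 N6 N2 N1 N5 P5) in h.
  rewrite (Hsw1 N6 N2 N5 N1 P5) in h.
  rewrite (Hsw2 N6 N2 N1 N5 P6) in h.
  rewrite (Hsw1 N6 N2 N5 N1 P6) in h.
  clear -h h270 h274 h66 h68 h69; nra. }
{ have h := HGP N6 N2 P6 N5 N1 P3 P5.
  rewrite (Hsw2 N6 N2 P6 N5 N1) in h.
  rewrite (Hsw3 N6 N2 N5 P6 N1) in h.
  rewrite (Hsw1 N6 N2 N5 N1 P6) in h.
  rewrite (Hsw2 N6 N2 P6 P3 P5) in h.
  rewrite (Hsw3 N6 N2 P3 P6 P5) in h.
  rewrite (Hsw2 N6 N2 P6 N5 P3) in h.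
  rewrite (Hsw3 N6 N2 N5 P6 P3) in h.
  rewrite (Hsw1 N6 N2 N5 P3 P6) in h.
  rewrite (Hsw2 N6 N2 P6 N1 P5) in h.
  rewrite (Hsw3 N6 N2 N1 P6 P5) in h.
  rewrite (Hsw2 N6 N2 P6 N5 P5) in h.
  rewrite (Hsw3 N6 N2 N5 P6 P5) in h.
  rewrite (Hsw1 N6 N2 N5 P5 P6) in h.
  rewrite (Hsw2 N6 N2 P6 N1 P3) in h.
  rewrite (Hsw3 N6 N2 N1 P6 P3) in h.
  clear -h h271 h274 h293 h69 h81 h84; nra. }
Qed.

Theorem mainTheorem1 (R : realType) : ~ polytopal_Delta R.
Proof.
case=> p [_ _ _ Hface].
have Hf : forall S : {set V}, S != setT -> in_Delta S -> is_face p S.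
  by move=> S hS hD; apply/(Hface S hS).
pose D a b c d e := d5 (q p a) (q p b) (q p c) (q p d) (q p e).
have hk : chk4 N6 N5 N4 N3 28 by vm_compute.
have Dr : D N6 N5 N4 N3 N2 != 0.
  have := @facet_pos R p Hf N6 N5 N4 N3 N2 N2 (inD4 hk)
    ltac:(by rewrite !inE) ltac:(by rewrite !inE) ltac:(by rewrite !inE) ltac:(by rewrite !inE)
    ltac:(by rewrite !inE) ltac:(by rewrite !inE).
  by rewrite -/(D _ _ _ _ _) => h; apply/eqP => e; rewrite e mul0r ltxx in h.
pose E : R := if 0 < D N6 N5 N4 N3 N2 then 1 else -1.
have EE : E * E = 1 by rewrite /E; case: ifP => _; rewrite ?mulr1 ?mulrNN ?mulr1.
apply: (@chain R (fun a b c d e => E * D a b c d e)).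
- move=> x1 x2 x3 a b c d.
  move: (GP (q p x1) (q p x2) (q p x3) (q p a) (q p b) (q p c) (q p d)).
  rewrite -!/(D _ _ _ _ _).
  clearbody D E => h.
  by rewrite -[RHS](mulr0 (E * E)) -h; ring.
- by move=> a b c d e; rewrite /D d5_sw0 mulrN.
- by move=> a b c d e; rewrite /D d5_sw1 mulrN.
- by move=> a b c d e; rewrite /D d5_sw2 mulrN.
- by move=> a b c d e; rewrite /D d5_sw3 mulrN.
- move=> f0 f1 f2 f3 v w k hk' hv hw n0 n1 n2 n3.
  have := @facet_pos R p Hf f0 f1 f2 f3 v w (inD4 hk') hv hw n0 n1 n2 n3.
  rewrite -/(D _ _ _ _ _) -/(D _ _ _ _ _).
  clearbody D E => h.
  have -> : E * D f0 f1 f2 f3 v * (E * D f0 f1 f2 f3 w) = (E * E) * (D f0 f1 f2 f3 v * D f0 f1 f2 f3 w) by ring.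
  by rewrite EE mul1r.
- rewrite /E; case: ifP => [h|]; first by rewrite mul1r.
  move/negbT; rewrite -leNgt le_eqVlt (negPf Dr) /= => h.
  by rewrite mulN1r oppr_gt0.
Qed.
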